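(* Consider the deterministic split-node max-neighbour algorithm described in the context, on a dynamic graph $(G_r)_{r\ge1}$ with node set $V$. For every round $r\ge1$, \[ D_r\ge t_{r-1}/30, \] where $t_r:=\max_{u,v\in V}|w_r(u)-w_r(v)|$.
   Context: Setting: a fixed set $V$ of $n$ nodes, a sequence of connected graphs $G_r=(V,E_r)$ ($r\ge1$), $N_r(v)$ the neighbours of $v$ in $G_r$, non-negative real loads $w_0(v)$, and $w_r(v)$ the load of $v$ at the end of round $r$. Algorithm: each node $v$ is split into two virtual nodes $v_s$ (sender) and $v_a$ (receiver). In round $r$: set $w_r^1(v_s)=w_r^1(v_a)=w_{r-1}(v)/2$. Each $v_s$ sends a proposal to $u_a$ where $u\in N_r(v)$ maximizes $|w_{r-1}(u)-w_{r-1}(v)|$ (ties broken by a fixed deterministic rule). Each $v_a$ that received proposals accepts exactly one, from $u_s$ with $u$ maximizing $|w_{r-1}(u)-w_{r-1}(v)|$ among proposers (deterministic tie-breaking). For each accepted pair $(u_s,v_a)$, set both virtual loads to $(w_r^1(u_s)+w_r^1(v_a))/2$; other virtual nodes keep their value; then $w_r(v)$ is the sum of the two virtual loads of $v$. An ordered pair $(u,v)$ connects at round $r$ if $u_s$'s proposal to $v_a$ was accepted in round $r$; $A_r$ is the set of ordered pairs that connect at round $r$, and $D_r=\frac12\sum_{(u,v)\in A_r}|w_{r-1}(u)-w_{r-1}(v)|$. *)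

(* Defs.v *)
From mathcomp Require Import all_boot all_order all_algebra.
Set Implicit Arguments. Unset Strict Implicit. Unset Printing Implicit Defensive.
Import Order.TTheory GRing.Theory Num.Theory.
Local Open Scope ring_scope.

Section SplitNode.
Variables (R : realFieldType) (V : finType).
(* G r is the graph of round r (r >= 1); G 0 is unused. *)
Variable G : nat -> rel V.
(* Deterministic tie-breaking rules, given as choice functions that may depend
   on the round and on the loads at the end of the previous round.
   prop r w v : the receiver u of v_s's proposal in round r (meaningful only
                if v has a neighbour);
   acc r w v  : the proposer accepted by v_a in round r (meaningful only if
                v_a received proposals). *)
Variable prop : nat -> (V -> R) -> V -> V.
Variable acc  : nat -> (V -> R) -> V -> V.

Definition nbrs (r : nat) (v : V) : {set V} := [set u | G r v u].

Definition prop_ok : Prop :=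
  forall r (w : V -> R) v, (0 < r)%N -> nbrs r v != set0 ->
    prop r w v \in nbrs r v /\
    (forall u, u \in nbrs r v -> `|w u - w v| <= `|w (prop r w v) - w v|).

(* set of u such that u_s sent its proposal to v_a in round r *)
Definition proposers (r : nat) (w : V -> R) (v : V) : {set V} :=
  [set u | (nbrs r u != set0) && (prop r w u == v)].

Definition acc_ok : Prop :=
  forall r (w : V -> R) v, (0 < r)%N -> proposers r w v != set0 ->
    acc r w v \in proposers r w v /\
    (forall u, u \in proposers r w v -> `|w u - w v| <= `|w (acc r w v) - w v|).

(* (u, v) connects in round r: u_s's proposal to v_a was accepted *)
Definition connects (r : nat) (w : V -> R) (u v : V) : bool :=
  (u \in proposers r w v) && (acc r w v == u).

(* virtual loads at the end of round r, given w = w_{r-1} *)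
Definition vload_s (r : nat) (w : V -> R) (v : V) : R :=
  if connects r w v (prop r w v)
  then (w v / 2 + w (prop r w v) / 2) / 2 else w v / 2.

Definition vload_a (r : nat) (w : V -> R) (v : V) : R :=
  if proposers r w v != set0
  then (w (acc r w v) / 2 + w v / 2) / 2 else w v / 2.

Definition step (r : nat) (w : V -> R) (v : V) : R :=
  vload_s r w v + vload_a r w v.

Variable w0 : V -> R.

Fixpoint load (r : nat) : V -> R :=
  match r with
  | 0 => w0
  | r'.+1 => step r'.+1 (load r')
  end.

Definition Dr (r : nat) : R :=
  2^-1 * \sum_(p : V * V | connects r (load r.-1) p.1 p.2)
            `|load r.-1 p.1 - load r.-1 p.2|.

Definition tr (r : nat) : R :=
  \big[Num.max/0]_(p : V * V) `|load r p.1 - load r p.2|.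

End SplitNode.

(* Main.v *)
Require Import Defs.
From mathcomp Require Import all_boot all_order all_algebra.
From mathcomp Require Import zify ring lra.
Import Order.TTheory GRing.Theory Num.Theory.
Local Open Scope ring_scope.

Section Aux.
Variables (R : realFieldType) (V : finType) (G : nat -> rel V)
    (prop acc : nat -> (V -> R) -> V -> V).
Variables (r : nat) (w : V -> R).
Hypothesis r0 : (0 < r)%N.
Hypothesis Gsym : symmetric (G r).
Hypothesis Gcon : forall x y, connect (G r) x y.
Hypothesis pok : prop_ok G prop.
Hypothesis aok : acc_ok G prop acc.

Fixpoint B (x0 : V) (k : nat) : {set V} :=
  match k with
  | 0 => [set x0]
  | k.+1 => B x0 k :|: [set v | [exists u in B x0 k, G r u v]]
  end.

Lemma B_add x0 k j v : v \in B x0 k -> v \in B x0 (k + j).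
Proof.
elim: j => [|j IH] Hv; first by rewrite addn0.
by rewrite addnS /= inE IH.
Qed.

Lemma B_mono x0 k l v : (k <= l)%N -> v \in B x0 k -> v \in B x0 l.
Proof. by move=> kl Hv; rewrite -(subnKC kl); apply: B_add. Qed.

Lemma B_path x0 p : path (G r) x0 p -> last x0 p \in B x0 (size p).
Proof.
elim/last_ind: p => [|p z IH]; first by rewrite /= inE.
rewrite rcons_path last_rcons size_rcons => /andP[Hp He].
rewrite /= inE; apply/orP; right; rewrite inE.
by apply/existsP; exists (last x0 p); rewrite IH.
Qed.

Lemma dist_ex x0 : exists dist : V -> nat,
  [/\ forall u v, G r u v -> (dist v <= (dist u).+1)%N,
      forall v, (0 < dist v)%N -> exists u, G r u v /\ (dist u).+1 = dist v
    & forall v, dist v = 0%N -> v = x0].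
Proof.
have exP v : exists k, v \in B x0 k.
  have /connectP[p Hp ->] := Gcon x0 v.
  by exists (size p); apply: B_path.
exists (fun v => ex_minn (exP v)); split.
- move=> u v Huv.
  case: ex_minnP => m Hm minm; case: ex_minnP => n Hn minn.
  apply: minm; rewrite /= inE; apply/orP; right; rewrite inE.
  by apply/existsP; exists u; rewrite Hn.
- move=> v; case: ex_minnP => m Hm minm.
  case: m Hm minm => [//|m] Hm minm _.
  have Hnm : v \notin B x0 m.
    by apply/negP => /minm; rewrite ltnn.
  move: Hm; rewrite /= inE (negbTE Hnm) /= inE => /existsP[u /andP[Hu Huv]].
  exists u; split => //.
  case: ex_minnP => k Hk mink.
  have km : (k <= m)%N by apply: mink.
  have : (m.+1 <= k.+1)%N.
    apply: minm; rewrite /= inE; apply/orP; right; rewrite inE.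
    by apply/existsP; exists u; rewrite Hk.
  by move=> H; apply/eqP; rewrite eqSS eqn_leq km.
- move=> v; case: ex_minnP => m Hm _ Hm0.
  by move: Hm; rewrite Hm0 /= inE => /eqP.
Qed.

Let d u := `|w (prop r w u) - w u|.

Lemma chain x0 (dist : V -> nat) :
  (forall v, (0 < dist v)%N -> exists u, G r u v /\ (dist u).+1 = dist v) ->
  (forall v, dist v = 0%N -> v = x0) ->
  forall v, exists c : seq V,
    [/\ uniq (map dist c), forall u, u \in c -> (dist u <= dist v)%N,
        forall u, u \in c -> nbrs G r u != set0
      & w x0 - w v <= \sum_(u <- c) d u].
Proof.
move=> Hpar H0.
suff: forall n v, dist v = n -> exists c : seq V,
    [/\ uniq (map dist c), forall u, u \in c -> (dist u <= dist v)%N,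
        forall u, u \in c -> nbrs G r u != set0
      & w x0 - w v <= \sum_(u <- c) d u].
  by move=> H v; apply: (H _ v erefl).
elim=> [|n IH] v Hv.
  exists [::]; split => //; rewrite (H0 v Hv) big_nil subrr //.
have [u [Huv Hdu]] : exists u, G r u v /\ (dist u).+1 = dist v by apply: Hpar; rewrite Hv.
have Hun : dist u = n by apply/eqP; rewrite -eqSS Hdu Hv.
have [c [Uc Lc Nc Sc]] := IH u Hun.
have Hvu : u \in nbrs G r v by rewrite inE Gsym.
have Nv : nbrs G r v != set0 by apply/set0Pn; exists u.
exists (v :: c); split.
- rewrite /= Uc andbT; apply/mapP => -[z Hz Hzv].
  by have := Lc z Hz; rewrite -Hzv Hun Hv ltnn.
- move=> z; rewrite inE => /orP[/eqP->//|Hz].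
  by rewrite (leq_trans (Lc z Hz)) // Hun Hv.
- by move=> z; rewrite inE => /orP[/eqP->//|Hz]; apply: Nc.
- rewrite big_cons.
  have [_ Hmax] := pok r w v r0 Nv.
  have := Hmax u Hvu.
  have := ler_norm (w u - w v).
  rewrite /d; lra.
Qed.

Lemma sum_count (c : seq V) (P : pred V) (F : V -> R) E :
  (forall u, u \in c -> P u -> F u <= E) ->
  \sum_(u <- c | P u) F u <= (count P c)%:R * E.
Proof.
elim: c => [|x c IH] H; first by rewrite big_nil /= mul0r.
rewrite big_cons /=.
have IH' : \sum_(u <- c | P u) F u <= (count P c)%:R * E.
  by apply: IH => u Hu; apply: H; rewrite inE Hu orbT.
case: (P x) (H x (mem_head _ _)) => /= Hx.
  by rewrite natrD mulrDl mul1r lerD // Hx.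
by rewrite add0n.
Qed.

Let S := \sum_(p : V * V | connects G prop acc r w p.1 p.2) `|w p.1 - w p.2|.
Let e a := if proposers G prop r w a != set0 then `|w (acc r w a) - w a| else 0.

Lemma S_ge : \sum_a e a <= S.
Proof.
rewrite /S [X in _ <= X]big_mkcond /=.
rewrite -(pair_bigA _ (fun u v =>
  if connects G prop acc r w u v then `|w u - w v| else 0)%R) /= exchange_big /=.
apply: ler_sum => a _; rewrite /e.
have g0 : forall u, 0 <= (if connects G prop acc r w u a then `|w u - w a| else 0).
  by move=> u; case: ifP.
case: ifP => Ha; last by apply: sumr_ge0.
rewrite (bigD1 (acc r w a)) //=.
have [Hin _] := aok r w a r0 Ha.
rewrite /connects Hin eqxx /= lerDl; apply: sumr_ge0 => u _; apply: g0.
Qed.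

Lemma core x y : w x - w y <= 3 * S.
Proof.
have [dist [Hd Hpar H0]] := dist_ex x.
have [c [Uc _ Nc Sc]] := @chain x dist Hpar H0 y.
apply: (le_trans Sc).
apply: (@le_trans _ _ (3 * \sum_a e a)); last first.
  by apply: ler_wpM2l => //; apply: S_ge.
rewrite (eq_bigr (fun u => \sum_(a | a == prop r w u) d u)); last first.
  by move=> u _; rewrite big_pred1_eq.
rewrite (exchange_big_dep xpredT) //= big_distrr /=.
apply: ler_sum => a _.
have Hle : forall u, u \in c -> a == prop r w u -> d u <= e a.
  move=> u Hu /= /eqP Ha.
  have Hp : u \in proposers G prop r w a by rewrite inE Nc //= Ha.
  have Hne : proposers G prop r w a != set0 by apply/set0Pn; exists u.
  rewrite /e Hne /d -Ha.
  have [_ Hm] := aok r w a r0 Hne.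
  by rewrite distrC; apply: Hm.
apply: (le_trans (@sum_count c (fun u => a == prop r w u) d (e a) Hle)).
have e0 : 0 <= e a by rewrite /e; case: ifP.
apply: ler_wpM2r => //.
rewrite ler_nat -size_filter -(size_map dist).
have -> : (3 = size [:: (dist a).-1; dist a; (dist a).+1])%N by [].
apply: uniq_leq_size.
  by apply: (subseq_uniq (map_subseq dist (filter_subseq _ c)) Uc).
move=> z /mapP[u]; rewrite mem_filter /= => /andP[/eqP Ha Hu] ->.
have [Hpn _] := pok r w u r0 (Nc u Hu).
rewrite -Ha inE in Hpn.
have h1 := Hd _ _ Hpn.
have h2 := Hd _ _ (etrans (Gsym a u) Hpn).
have : dist u = (dist a).-1 \/ dist u = dist a \/ dist u = (dist a).+1 by lia.
by rewrite !inE => -[->|[->|->]]; rewrite eqxx ?orbT.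
Qed.

Lemma S_ge0 : 0 <= S.
Proof. by apply: sumr_ge0. Qed.

End Aux.

Theorem lemma3 (R : realFieldType) (V : finType) (G : nat -> rel V)
    (prop acc : nat -> (V -> R) -> V -> V) (w0 : V -> R) :
  (forall r, (0 < r)%N ->
     [/\ symmetric (G r), irreflexive (G r) & forall x y, connect (G r) x y]) ->
  (forall v, 0 <= w0 v) ->
  prop_ok G prop -> acc_ok G prop acc ->
  forall r, (0 < r)%N ->
    tr G prop acc w0 r.-1 / 30 <= Dr G prop acc w0 r.
Proof.
move=> HG _ pok aok r r0.
have [Gsym _ Gcon] := HG r r0.
rewrite /tr /Dr.
set w := load G prop acc w0 r.-1.
have S0 := @S_ge0 R V G prop acc r w.
have core' := @core R V G prop acc r w r0 Gsym Gcon pok aok.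
set S := \sum_(p | _) _ in S0 core' *.
have Ht : \big[Num.max/0]_(p : V * V) `|w p.1 - w p.2| <= 3 * S.
  apply: bigmax_le; first lra.
  move=> p _; rewrite ler_norml; apply/andP; split.
    have := core' p.2 p.1; lra.
  exact: core'.
lra.
Qed.
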